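(* Let $L\subseteq Q$ be a dense extension of symmetric Leibniz algebras, with $L$ semiprime and $\mathrm{ran}(Q)=\mathrm{lan}(Q)=\{0\}$. If $\mathscr{A}(Q)$ is strong right ideally absorbed into $\mathscr{A}_0$, then $\mathscr{A}(Q)$ is a left quotient algebra of $\mathscr{A}_0$.
   Context: A symmetric Leibniz algebra satisfies both $[x,[y,z]]=[[x,y],z]-[[x,z],y]$ and $[x,[y,z]]=[[x,y],z]+[y,[x,z]]$. $L$ semiprime: $[I,I]\ne\{0\}$ for each nonzero ideal $I$ of $L$. $\mathrm{lan}(Q)=\{x:[x,Q]=0\}$, $\mathrm{ran}(Q)=\{x:[Q,x]=0\}$. For $x\in Q$, $R_x(u)=[u,x]$, $L_x(u)=[x,u]$; $M(Q)$ is the associative subalgebra of $\mathrm{End}(Q)$ generated by the identity and all $R_x,L_x$; $L$ is dense in $Q$ if the only $\mu\in M(Q)$ with $\mu(L)=\{0\}$ is $0$. $\mathscr{A}(Q)$ is the associative subalgebra generated by all $R_x,L_x$, $\mathscr{A}_0=\{\mu\in\mathscr{A}(Q):\mu(L)\subseteq L\}$. An associative algebra $S$ is strong right ideally absorbed into a subalgebra $A$ if for any $p,q\in S\setminus\{0\}$ there is a two-sided ideal $I$ of $A$ with $\{a\in A:aI=0\}=\{0\}$ such that $pI\ne\{0\}$ or $qI\ne\{0\}$, and $pI,qI\subseteq A$. $S$ is a left quotient algebra of $A$ if for all $p,q\in S$ with $p\ne0$ there is $x\in A$ with $xp\ne0$ and $xq\in A$. *)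

(* Defs.v *)
From HB Require Import structures.
From mathcomp Require Import all_boot all_order all_algebra.
Set Implicit Arguments. Unset Strict Implicit. Unset Printing Implicit Defensive.
Import GRing.Theory.
Local Open Scope ring_scope.

Section Defs.
Variables (F : fieldType) (Q : lmodType F).

Definition bilinear_br (br : Q -> Q -> Q) : Prop :=
  (forall a x y z, br (a *: x + y) z = a *: br x z + br y z) /\
  (forall a x y z, br x (a *: y + z) = a *: br x y + br x z).

Definition symmetric_leibniz (br : Q -> Q -> Q) : Prop :=
  [/\ bilinear_br br,
      (forall x y z, br x (br y z) = br (br x y) z - br (br x z) y) &
      (forall x y z, br x (br y z) = br (br x y) z + br y (br x z))].

Definition subalgebra (br : Q -> Q -> Q) (L : Q -> Prop) : Prop :=
  [/\ L 0, (forall a x y, L x -> L y -> L (a *: x + y)) &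
      (forall x y, L x -> L y -> L (br x y))].

Definition ideal_of (br : Q -> Q -> Q) (L I : Q -> Prop) : Prop :=
  [/\ (forall x, I x -> L x), I 0,
      (forall a x y, I x -> I y -> I (a *: x + y)),
      (forall x y, L x -> I y -> I (br x y)) &
      (forall x y, I x -> L y -> I (br x y))].

Definition semiprime (br : Q -> Q -> Q) (L : Q -> Prop) : Prop :=
  forall I, ideal_of br L I -> (exists x, I x /\ x <> 0) ->
    exists x y, [/\ I x, I y & br x y <> 0].

Definition lan_trivial (br : Q -> Q -> Q) : Prop :=
  forall x, (forall y, br x y = 0) -> x = 0.
Definition ran_trivial (br : Q -> Q -> Q) : Prop :=
  forall x, (forall y, br y x = 0) -> x = 0.

(* The associative subalgebra of End(Q) (product = composition) generated
   by all R_x, L_x, and also by the identity when withId = true.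
   M(Q) = gen_alg br true, A(Q) = gen_alg br false. *)
Inductive gen_alg (br : Q -> Q -> Q) (withId : bool) : (Q -> Q) -> Prop :=
| ga_R x : gen_alg br withId (fun u => br u x)
| ga_L x : gen_alg br withId (fun u => br x u)
| ga_id : withId -> gen_alg br withId (fun u => u)
| ga_zero : gen_alg br withId (fun _ => 0)
| ga_add f g : gen_alg br withId f -> gen_alg br withId g ->
               gen_alg br withId (fun u => f u + g u)
| ga_scale a f : gen_alg br withId f -> gen_alg br withId (fun u => a *: f u)
| ga_comp f g : gen_alg br withId f -> gen_alg br withId g ->
               gen_alg br withId (fun u => f (g u)).

Definition MQ br := gen_alg br true.
Definition AQ br := gen_alg br false.

Definition A0 br (L : Q -> Prop) (mu : Q -> Q) : Prop :=
  AQ br mu /\ forall x, L x -> L (mu x).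

Definition dense br (L : Q -> Prop) : Prop :=
  forall mu, MQ br mu -> (forall x, L x -> mu x = 0) -> forall u, mu u = 0.

Definition nonzero_end (f : Q -> Q) : Prop := exists u, f u <> 0.

Definition assoc_ideal (A I : (Q -> Q) -> Prop) : Prop :=
  [/\ (forall i, I i -> A i), I (fun _ => 0),
      (forall a i j, I i -> I j -> I (fun u => a *: i u + j u)),
      (forall a i, A a -> I i -> I (fun u => a (i u))) &
      (forall a i, A a -> I i -> I (fun u => i (a u)))].

Definition lann_trivial (A I : (Q -> Q) -> Prop) : Prop :=
  forall a, A a -> (forall i, I i -> forall u, a (i u) = 0) -> forall u, a u = 0.

Definition mul_ideal_nonzero (p : Q -> Q) (I : (Q -> Q) -> Prop) : Prop :=
  exists i, I i /\ nonzero_end (fun u => p (i u)).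

Definition strong_right_ideally_absorbed (S A : (Q -> Q) -> Prop) : Prop :=
  forall p q, S p -> S q -> nonzero_end p -> nonzero_end q ->
    exists I, [/\ assoc_ideal A I, lann_trivial A I,
      mul_ideal_nonzero p I \/ mul_ideal_nonzero q I,
      (forall i, I i -> A (fun u => p (i u))) &
      (forall i, I i -> A (fun u => q (i u)))].

Definition left_quotient_algebra (S A : (Q -> Q) -> Prop) : Prop :=
  forall p q, S p -> S q -> nonzero_end p ->
    exists x, [/\ A x, nonzero_end (fun u => x (p u)) & A (fun u => x (q u))].

End Defs.

(* Main.v *)
Require Import Defs.
From mathcomp Require Import all_boot all_order all_algebra.
From Stdlib Require Import Classical.
Set Implicit Arguments. Unset Strict Implicit. Unset Printing Implicit Defensive.
Import GRing.Theory.
Local Open Scope ring_scope.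

Definition linf (F : fieldType) (Q : lmodType F) (f : Q -> Q) : Prop :=
  forall (a : F) x y, f (a *: x + y) = a *: f x + f y.

Lemma linf0 (F : fieldType) (Q : lmodType F) (f : Q -> Q) : linf f -> f 0 = 0.
Proof.
move=> H; have := H 1 0 0; rewrite !scale1r addr0.
by move/(congr1 (fun t => t - f 0)); rewrite /= subrr addrK => <-.
Qed.

Lemma linfD (F : fieldType) (Q : lmodType F) (f : Q -> Q) x y :
  linf f -> f (x + y) = f x + f y.
Proof. by move=> H; have := H 1 x y; rewrite !scale1r. Qed.

Lemma linfZ (F : fieldType) (Q : lmodType F) (f : Q -> Q) a x :
  linf f -> f (a *: x) = a *: f x.
Proof. by move=> H; have := H a x 0; rewrite addr0 (linf0 H) addr0. Qed.

Lemma bil_l (F : fieldType) (Q : lmodType F) (br : Q -> Q -> Q) z :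
  bilinear_br br -> linf (fun x => br x z).
Proof. by case=> H1 H2 a x y; apply: H1. Qed.

Lemma bil_r (F : fieldType) (Q : lmodType F) (br : Q -> Q -> Q) z :
  bilinear_br br -> linf (fun x => br z x).
Proof. by case=> H1 H2 a x y; apply: H2. Qed.

Lemma AQ_lin (F : fieldType) (Q : lmodType F) (br : Q -> Q -> Q) f :
  bilinear_br br -> AQ br f -> linf f.
Proof.
move=> Hb; elim=> //.
- by move=> x; apply: bil_l.
- by move=> x; apply: bil_r.
- by move=> a x y; rewrite scaler0 addr0.
- move=> f1 g1 _ H1 _ H2 a x y /=; rewrite H1 H2 scalerDr.
  by rewrite -!addrA; congr (_ + _); rewrite addrCA.
- move=> c f1 _ H1 a x y /=; rewrite H1 scalerDr !scalerA mulrC //.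
- by move=> f1 g1 _ H1 _ H2 a x y /=; rewrite H2 H1.
Qed.

Lemma AQ_MQ (F : fieldType) (Q : lmodType F) (br : Q -> Q -> Q) f :
  AQ br f -> MQ br f.
Proof.
elim=> //; try by constructor.
Qed.

Lemma A0_comp (F : fieldType) (Q : lmodType F) (br : Q -> Q -> Q) L f g :
  A0 br L f -> A0 br L g -> A0 br L (fun u => f (g u)).
Proof.
case=> Af Lf [Ag Lg]; split; first exact: ga_comp.
by move=> x Lx; apply: Lf; apply: Lg.
Qed.

Definition good (F : fieldType) (Q : lmodType F) (br : Q -> Q -> Q) L I :=
  assoc_ideal (A0 br L) I /\ lann_trivial (A0 br L) I.

Lemma good_inter (F : fieldType) (Q : lmodType F) (br : Q -> Q -> Q) L I J :
  good br L I -> good br L J -> good br L (fun i => I i /\ J i).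
Proof.
move=> [[I1 I2 I3 I4 I5] Il] [[J1 J2 J3 J4 J5] Jl]; split.
  split.
  - by move=> i [/I1].
  - by [].
  - by move=> a i j [Ii Ji] [Ij Jj]; split; [apply: I3|apply: J3].
  - by move=> a i Aa [Ii Ji]; split; [apply: I4|apply: J4].
  - by move=> a i Aa [Ii Ji]; split; [apply: I5|apply: J5].
move=> a Aa Ha; apply: Jl => // j Jj u.
have Aaj : A0 br L (fun u => a (j u)) by apply: A0_comp => //; apply J1.
apply: (Il _ Aaj) => i Ii w.
have := Ha (fun u => j (i u)); apply.
by split; [apply I4 => //; apply J1 | apply J5 => //; apply I1].
Qed.

Fixpoint Deep (F : fieldType) (Q : lmodType F) (br : Q -> Q -> Q) L
  (I : (Q -> Q) -> Prop) (n : nat) (f : Q -> Q) : Prop :=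
  match n with
  | 0 => A0 br L f
  | m.+1 => exists i g, [/\ I i, Deep br L I m g & f = (fun u => i (g u))]
  end.

Lemma Deep_A0 (F : fieldType) (Q : lmodType F) (br : Q -> Q -> Q) L I n f :
  good br L I -> Deep br L I n f -> A0 br L f.
Proof.
move=> [[I1 _ _ _ _] _]; elim: n f => [//|n IH] f /= [i [g [Ii Dg ->]]].
by apply: A0_comp; [apply: I1|apply: IH].
Qed.

Lemma Deep_left (F : fieldType) (Q : lmodType F) (br : Q -> Q -> Q) L I n a g :
  good br L I -> A0 br L a -> Deep br L I n g -> Deep br L I n (fun u => a (g u)).
Proof.
move=> [[I1 _ _ I4 _] _] Aa; case: n => [|n] /=; first by apply: A0_comp.
case=> i [g' [Ii Dg ->]]; exists (fun u => a (i u)), g'; split => //.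
exact: I4.
Qed.

Lemma Deep_S (F : fieldType) (Q : lmodType F) (br : Q -> Q -> Q) L I n f :
  good br L I -> Deep br L I n.+1 f -> Deep br L I n f.
Proof.
move=> G /= [i [g [Ii Dg ->]]]; apply: Deep_left => //.
by case: G => [[I1 _ _ _ _] _]; apply: I1.
Qed.

Inductive Cspan (F : fieldType) (Q : lmodType F) (br : Q -> Q -> Q) L
  (I : (Q -> Q) -> Prop) (n : nat) : Q -> Prop :=
| c_img f w : Deep br L I n f -> L w -> Cspan br L I n (f w)
| c_zero : Cspan br L I n 0
| c_lin a x y : Cspan br L I n x -> Cspan br L I n y -> Cspan br L I n (a *: x + y).

Lemma Cspan_map (F : fieldType) (Q : lmodType F) (br : Q -> Q -> Q) L I n m h x :
  linf h -> (forall f w, Deep br L I n f -> L w -> Cspan br L I m (h (f w))) ->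
  Cspan br L I n x -> Cspan br L I m (h x).
Proof.
move=> Hl Hh; elim => [f w Df Lw|| a x1 y1 _ H1 _ H2]; first exact: Hh.
  by rewrite linf0 //; apply: c_zero.
by rewrite Hl; apply: c_lin.
Qed.

Lemma Cspan_A0 (F : fieldType) (Q : lmodType F) (br : Q -> Q -> Q) L I n a x :
  bilinear_br br -> good br L I -> A0 br L a -> Cspan br L I n x -> Cspan br L I n (a x).
Proof.
move=> Hb G Aa; apply: (Cspan_map (h := a)); first by apply: (AQ_lin Hb); case: Aa.
move=> f w Df Lw; apply: (c_img (f := fun u => a (f u))) => //.
exact: Deep_left.
Qed.

Lemma Cspan_shift (F : fieldType) (Q : lmodType F) (br : Q -> Q -> Q) L I n h x :
  good br L I -> linf h -> (forall i, I i -> A0 br L (fun u => h (i u))) ->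
  Cspan br L I n.+1 x -> Cspan br L I n (h x).
Proof.
move=> G Hl Hh; apply: (Cspan_map (h := h)) => // f w /= [i [g [Ii Dg ->]]] Lw.
apply: (c_img (f := fun u => h (i (g u)))) => //.
exact: (Deep_left (g := g) G (Hh _ Ii)).
Qed.

Lemma Cspan_mono (F : fieldType) (Q : lmodType F) (br : Q -> Q -> Q) L I m n x :
  bilinear_br br -> good br L I -> (m <= n)%N -> Cspan br L I n x -> Cspan br L I m x.
Proof.
move=> Hb G /subnK <-; elim: (n - m)%N x => [|k IH] x; first by rewrite add0n.
move=> H; apply: IH; rewrite addSn in H.
apply: (Cspan_map (h := fun u => u)) H; first by move=> a x1 y1.
by move=> f w Df Lw; apply: c_img => //; apply: Deep_S.
Qed.

Lemma Cspan0_L (F : fieldType) (Q : lmodType F) (br : Q -> Q -> Q) L I x :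
  subalgebra br L -> Cspan br L I 0 x -> L x.
Proof.
case=> L0 Ll _; elim => [f w [_ Hf] Lw|//|a x1 y1 _ H1 _ H2]; first exact: Hf.
exact: Ll.
Qed.

Definition Xi (F : fieldType) (Q : lmodType F) (br : Q -> Q -> Q) L I
  (g : Q -> Q) (d : nat) : Prop :=
  forall n a u, Cspan br L I (n + d) a -> L u -> Cspan br L I n (br a (g u)).

Lemma Xi_mono (F : fieldType) (Q : lmodType F) (br : Q -> Q -> Q) L I g d d' :
  bilinear_br br -> good br L I -> (d <= d')%N -> Xi br L I g d -> Xi br L I g d'.
Proof.
move=> Hb G le X n a u Ca Lu; apply: X => //.
by apply: Cspan_mono Ca => //; rewrite leq_add2l.
Qed.

Lemma Cspan_add (F : fieldType) (Q : lmodType F) (br : Q -> Q -> Q) L I n x y :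
  Cspan br L I n x -> Cspan br L I n y -> Cspan br L I n (x + y).
Proof. by move=> Hx Hy; rewrite -[x]scale1r; apply: c_lin. Qed.

Lemma Cspan_scale (F : fieldType) (Q : lmodType F) (br : Q -> Q -> Q) L I n (c : F) x :
  Cspan br L I n x -> Cspan br L I n (c *: x).
Proof. by move=> Hx; rewrite -[c *: x]addr0; apply: c_lin => //; apply: c_zero. Qed.

Lemma Cspan_sub (F : fieldType) (Q : lmodType F) (br : Q -> Q -> Q) L I n x y :
  Cspan br L I n x -> Cspan br L I n y -> Cspan br L I n (x - y).
Proof.
by move=> Hx Hy; rewrite addrC -scaleN1r; apply: c_lin.
Qed.

Lemma gen_ideal (F : fieldType) (Q : lmodType F) (br : Q -> Q -> Q) L Ib y :
  ran_trivial br -> lan_trivial br ->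
  strong_right_ideally_absorbed (AQ br) (A0 br L) -> good br L Ib ->
  exists I0, good br L I0 /\ (y = 0 \/ forall i, I0 i ->
     A0 br L (fun u => br y (i u)) /\ A0 br L (fun u => br (i u) y)).
Proof.
move=> Hr Hl Ha Gb; case: (classic (y = 0)) => [->|y0].
  by exists Ib; split => //; left.
have nL : nonzero_end (fun u => br y u).
  apply: NNPP => H; apply: y0; apply: Hl => z; apply: NNPP => Hz; apply: H.
  by exists z.
have nR : nonzero_end (fun u => br u y).
  apply: NNPP => H; apply: y0; apply: Hr => z; apply: NNPP => Hz; apply: H.
  by exists z.
have [I0 [Hi Hlt _ H1 H2]] := Ha _ _ (ga_L br false y) (ga_R br false y) nL nR.
by exists I0; split; [split|right => i Ii; split; [apply: H1|apply: H2]].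
Qed.

Lemma claim (F : fieldType) (Q : lmodType F) (br : Q -> Q -> Q) L Ib :
  symmetric_leibniz br -> subalgebra br L -> ran_trivial br -> lan_trivial br ->
  strong_right_ideally_absorbed (AQ br) (A0 br L) -> good br L Ib ->
  forall g1, AQ br g1 -> exists I0, good br L I0 /\ exists e : nat,
    forall I, good br L I -> (forall i, I i -> I0 i) ->
    forall g2 d2, Xi br L I g2 d2 -> Xi br L I (fun u => g1 (g2 u)) (d2 + e).
Proof.
move=> [Hb Id1 Id2] Hs Hr Hl Ha Gb g1; elim.
-
  move=> y; have [I0 [G0 Hy]] := gen_ideal y Hr Hl Ha Gb.
  exists I0; split => //; exists 1%N => I G sub g2 d2 X n a u Ca Lu /=.
  case: Hy => [->|Hy].
    by rewrite (linf0 (bil_r (g2 u) Hb)) (linf0 (bil_r a Hb)); apply: c_zero.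
  rewrite Id1; apply: Cspan_sub.
  + apply: (Cspan_shift (h := fun x => br x y)) => //; first exact: bil_l.
      by move=> i Ii; case: (Hy i (sub i Ii)).
    apply: X => //; move: Ca; by rewrite addn1 addnS addSn.
  + apply: X => //; apply: (Cspan_shift (h := fun x => br x y)) => //.
      exact: bil_l.
      by move=> i Ii; case: (Hy i (sub i Ii)).
    by move: Ca; rewrite addnA addn1.
-
  move=> y; have [I0 [G0 Hy]] := gen_ideal y Hr Hl Ha Gb.
  exists I0; split => //; exists 1%N => I G sub g2 d2 X n a u Ca Lu /=.
  case: Hy => [->|Hy].
    by rewrite (linf0 (bil_l (g2 u) Hb)) (linf0 (bil_r a Hb)); apply: c_zero.
  rewrite Id2; apply: Cspan_add.
  + apply: X => //; apply: (Cspan_shift (h := fun x => br x y)) => //.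
      exact: bil_l.
      by move=> i Ii; case: (Hy i (sub i Ii)).
    by move: Ca; rewrite addnA addn1.
  + apply: (Cspan_shift (h := fun x => br y x)) => //; first exact: bil_r.
      by move=> i Ii; case: (Hy i (sub i Ii)).
    apply: X => //; move: Ca; by rewrite addn1 addnS addSn.
- by [].
- exists Ib; split => //; exists 0%N => I G sub g2 d2 X n a u Ca Lu /=.
  by rewrite (linf0 (bil_r a Hb)); apply: c_zero.
- move=> f h _ [I0f [Gf [ef Pf]]] _ [I0h [Gh [eh Ph]]].
  exists (fun i => I0f i /\ I0h i); split; first exact: good_inter.
  exists (ef + eh)%N => I G sub g2 d2 X n a u Ca Lu /=.
  rewrite (linfD _ _ (bil_r a Hb)); apply: Cspan_add.
  + have X' : Xi br L I (fun u => f (g2 u)) (d2 + (ef + eh)).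
      apply: (Xi_mono Hb G _ (Pf I G (fun i Ii => (sub i Ii).1) g2 d2 X)).
      by rewrite leq_add2l leq_addr.
    exact: X' Ca Lu.
  + have X' : Xi br L I (fun u => h (g2 u)) (d2 + (ef + eh)).
      apply: (Xi_mono Hb G _ (Ph I G (fun i Ii => (sub i Ii).2) g2 d2 X)).
      by rewrite leq_add2l leq_addl.
    exact: X' Ca Lu.
- move=> c f _ [I0 [G0 [e P]]]; exists I0; split => //; exists e.
  move=> I G sub g2 d2 X n a u Ca Lu /=.
  by rewrite (linfZ _ _ (bil_r a Hb)); apply: Cspan_scale; apply: (P I G sub g2 d2 X).
- move=> f h _ [I0f [Gf [ef Pf]]] _ [I0h [Gh [eh Ph]]].
  exists (fun i => I0f i /\ I0h i); split; first exact: good_inter.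
  exists (eh + ef)%N => I G sub g2 d2 X.
  have Xh := Ph I G (fun i Ii => (sub i Ii).2) g2 d2 X.
  have Xf := Pf I G (fun i Ii => (sub i Ii).1) _ _ Xh.
  by rewrite addnA.
Qed.

Lemma Deep_kill (F : fieldType) (Q : lmodType F) (br : Q -> Q -> Q) L I n :
  good br L I -> forall b, A0 br L b ->
  (forall f u, Deep br L I n f -> b (f u) = 0) -> forall u, b u = 0.
Proof.
move=> G; case: (G) => [[I1 _ _ _ _] Il].
elim: n => [|n IH] b Ab H.
  by apply: (Il _ Ab) => i Ii u; apply: H; apply: I1.
apply: (Il _ Ab) => i Ii u.
apply: (IH (fun u => b (i u))); first by apply: A0_comp => //; apply I1.
move=> g w Dg; apply: (H (fun u => i (g u))).
by exists i, g; split.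
Qed.

Theorem corollary6p10 (F : fieldType) (Q : lmodType F)
    (br : Q -> Q -> Q) (L : Q -> Prop) :
  symmetric_leibniz br ->
  subalgebra br L ->
  dense br L ->
  semiprime br L ->
  ran_trivial br -> lan_trivial br ->
  strong_right_ideally_absorbed (AQ br) (A0 br L) ->
  left_quotient_algebra (AQ br) (A0 br L).
Proof.
move=> Hsl Hs Hd _ Hr Hl Ha p q Ap Aq [u0 pu0].
have Hb : bilinear_br br by case: Hsl.
case: (Hs) => HL0 HLl HLb.
set v := p u0.
have nR : nonzero_end (fun u => br u v).
  apply: NNPP => H; apply: pu0; apply: Hr => z; apply: NNPP => Hz; apply: H.
  by exists z.
have [I' [Hi' Hl' Hnz H1 _]] := Ha _ _ (ga_R br false v) (ga_R br false v) nR nR.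
have G' : good br L I' by [].
have [i0 [Ii0 nz0]] : mul_ideal_nonzero (fun u => br u v) I' by case: Hnz.
have [I [G [e P]]] := claim Hsl Hs Hr Hl Ha G' Aq.
have X0 : Xi br L I (fun u => u) 0.
  move=> n a u Ca Lu; rewrite addn0 in Ca.
  apply: (Cspan_A0 (a := fun x => br x u) Hb G) Ca.
  by split; [apply: ga_R | move=> x Lx; apply: HLb].
have Xq := P I G (fun i Ii => Ii) (fun u => u) 0%N X0.
case: (classic (exists f w, [/\ Deep br L I e f, L w & br (f w) v <> 0])).
  move=> [f [w [Df Lw nz]]].
  have Af := Deep_A0 G Df.
  have La : L (f w) by case: Af => _; apply.
  exists (fun u => br (f w) u); split.
  - by split; [apply: ga_L | move=> x Lx; apply: HLb].
  - by exists u0.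
  - split; first by apply: ga_comp => //; apply: ga_L.
    move=> u Lu /=; apply: (Cspan0_L (I := I) Hs).
    apply: (Xq 0%N (f w) u) => //; rewrite !add0n; exact: c_img.
move=> Hno.
have Hkill : forall f, Deep br L I e f -> forall u, br (f u) v = 0.
  move=> f Df; apply: (Hd (fun u => br (f u) v)).
    apply: (ga_comp (f := fun x => br x v) (g := f)); first exact: ga_R.
    by apply: AQ_MQ; case: (Deep_A0 G Df).
  by move=> w Lw; apply: NNPP => nz; apply: Hno; exists f, w.
exfalso; case: nz0 => w nzw; apply: nzw.
apply: (Deep_kill G (b := fun u => br (i0 u) v) (n := e)) => //.
  exact: H1.
move=> f u Df; apply: (Hkill (fun u => i0 (f u))).
apply: Deep_left => //; case: Hi' => I1 _ _ _ _; exact: I1.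
Qed.
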